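(* Let $\kappa$ be a regular cardinal, $\omega\le\lambda\le\kappa$, $\tau$ a signature with $|\mathrm{fnc}(\tau)|<\kappa$, and $1\le\nu<\lambda$ a cardinal. Then $\mathcal L_{\kappa,\lambda}(\tau)$ is closed under $\vartheta_{\le\nu}$ and under $\vartheta_\nu$: for every sentence $\varphi$ of $\mathcal L_{\kappa,\lambda}(\tau)$, both $\vartheta_{\le\nu}(\varphi)$ and $\vartheta_\nu(\varphi)$ are expressible by sentences of $\mathcal L_{\kappa,\lambda}(\tau)$.
   Context: $\mathrm{fnc}(\tau)$ is the set of function symbols of $\tau$ (constants counted as $0$-ary function symbols). Models are nonempty; a submodel is a substructure (nonempty subset closed under the interpretations of the symbols in $\mathrm{fnc}(\tau)$). $\mathcal L_{\kappa,\lambda}(\tau)$ is the infinitary first-order language with equality allowing negation, conjunctions/disjunctions of fewer than $\kappa$ formulas, and quantification over blocks of fewer than $\lambda$ variables. $\mathfrak A\vDash\vartheta_{\nu}(\varphi)$ (resp. $\vartheta_{\le\nu}(\varphi)$) iff $\mathfrak A$ has a submodel of cardinality exactly $\nu$ (resp. $\le\nu$) satisfying $\varphi$. A property is expressible by a sentence $\chi$ if for every $\tau$-model $\mathfrak A$, $\mathfrak A$ has the property iff $\mathfrak A\vDash\chi$. *)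

(* Defs.v *)
From mathcomp Require Import ssreflect ssrfun ssrbool eqtype ssrnat fintype.
Set Implicit Arguments.
Unset Strict Implicit.

(** * Cardinal comparisons between types (a cardinal is represented by a type) *)
Definition le_card (A B : Type) : Prop := exists f : A -> B, injective f.
Definition lt_card (A B : Type) : Prop := le_card A B /\ ~ le_card B A.
Definition eq_card (A B : Type) : Prop := exists f : A -> B, bijective f.

Definition regular_card (K : Type) : Prop :=
  le_card nat K /\
  forall (I : Type) (F : I -> Type),
    lt_card I K -> (forall i, lt_card (F i) K) -> lt_card {i : I & F i} K.

(** * Signatures (finitary function and relation symbols; constants are
      0-ary function symbols) *)
Record signature := Signature {
  fsym : Type;
  farity : fsym -> nat;
  rsym : Type;
  rarity : rsym -> nat }.

Section Syntax.
Variable tau : signature.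

Inductive term (X : Type) : Type :=
| TVar : X -> term X
| TApp : forall f : fsym tau, ('I_(farity f) -> term X) -> term X.

(** infinitary formulas with free variables in [X] (de Bruijn-style contexts):
    a block quantifier binds a block of variables indexed by [B]. *)
Inductive form : Type -> Type :=
| FEq   : forall X, term X -> term X -> form X
| FRel  : forall X (r : rsym tau), ('I_(rarity r) -> term X) -> form X
| FNeg  : forall X, form X -> form X
| FConj : forall X (I : Type), (I -> form X) -> form X
| FDisj : forall X (I : Type), (I -> form X) -> form X
| FEx   : forall X (B : Type), form (X + B)%type -> form X
| FAll  : forall X (B : Type), form (X + B)%type -> form X.

Inductive inL (K L : Type) : forall X, form X -> Prop :=
| inL_eq   : forall X t1 t2, inL K L (@FEq X t1 t2)
| inL_rel  : forall X r ts, inL K L (@FRel X r ts)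
| inL_neg  : forall X p, inL K L p -> inL K L (@FNeg X p)
| inL_conj : forall X I ps, lt_card I K -> (forall i, inL K L (ps i)) ->
               inL K L (@FConj X I ps)
| inL_disj : forall X I ps, lt_card I K -> (forall i, inL K L (ps i)) ->
               inL K L (@FDisj X I ps)
| inL_ex   : forall X B p, lt_card B L -> inL K L p -> inL K L (@FEx X B p)
| inL_all  : forall X B p, lt_card B L -> inL K L p -> inL K L (@FAll X B p).

Definition sentence := form Empty_set.

Record model := Model {
  carrier : Type;
  carrier_ne : inhabited carrier;
  fint : forall f : fsym tau, ('I_(farity f) -> carrier) -> carrier;
  rint : forall r : rsym tau, ('I_(rarity r) -> carrier) -> Prop }.

Fixpoint eval_term (M : model) X (e : X -> carrier M) (t : term X) : carrier M :=
  match t with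
  | TVar x => e x
  | TApp f ts => @fint M f (fun i => eval_term e (ts i))
  end.

Definition extend (A X B : Type) (e : X -> A) (a : B -> A) (z : X + B) : A :=
  match z with inl x => e x | inr b => a b end.

Fixpoint sat (M : model) X (phi : form X) : (X -> carrier M) -> Prop :=
  match phi in form Y return (Y -> carrier M) -> Prop with
  | FEq _ t1 t2 => fun e => eval_term e t1 = eval_term e t2
  | FRel _ r ts => fun e => @rint M r (fun i => eval_term e (ts i))
  | FNeg _ p => fun e => ~ sat p e
  | FConj _ _ ps => fun e => forall i, sat (ps i) e
  | FDisj _ _ ps => fun e => exists i, sat (ps i) e
  | FEx _ B p => fun e => exists a : B -> carrier M, sat p (extend e a)
  | FAll _ B p => fun e => forall a : B -> carrier M, sat p (extend e a)
  end.

Definition models (M : model) (phi : sentence) : Prop :=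
  @sat M Empty_set phi (fun z : Empty_set => match z return carrier M with end).

Definition fclosed (M : model) (S : carrier M -> Prop) : Prop :=
  forall (f : fsym tau) (args : 'I_(farity f) -> carrier M),
    (forall i, S (args i)) -> S (@fint M f args).

Definition submodel (M : model) (S : carrier M -> Prop)
  (a0 : {a : carrier M | S a}) (hS : fclosed S) : model :=
  @Model {a : carrier M | S a} (inhabits a0)
    (fun f args => exist S (@fint M f (fun i => proj1_sig (args i)))
                      (hS f _ (fun i => proj2_sig (args i))))
    (fun r args => @rint M r (fun i => proj1_sig (args i))).

Definition theta_eq (N : Type) (phi : sentence) (M : model) : Prop :=
  exists (S : carrier M -> Prop) (a0 : {a : carrier M | S a}) (hS : fclosed S),
    eq_card {a : carrier M | S a} N /\ models (submodel a0 hS) phi.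

Definition theta_le (N : Type) (phi : sentence) (M : model) : Prop :=
  exists (S : carrier M -> Prop) (a0 : {a : carrier M | S a}) (hS : fclosed S),
    le_card {a : carrier M | S a} N /\ models (submodel a0 hS) phi.

Definition expressible_in (K L : Type) (P : model -> Prop) : Prop :=
  exists chi : sentence, inL K L chi /\ forall M : model, P M <-> models M chi.

End Syntax.

(* Main.v *)
Require Import Defs.
From mathcomp Require Import ssreflect ssrfun ssrbool eqtype ssrnat fintype.
From Stdlib Require Import Classical ClassicalEpsilon FunctionalExtensionality ProofIrrelevance.
Import Defs.
Set Implicit Arguments.
Unset Strict Implicit.

Lemma le_card_trans A B C : le_card A B -> le_card B C -> le_card A C.
Proof. move=> [f hf] [g hg]; exists (fun a => g (f a)) => x y /hg /hf. done. Qed.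

Lemma lt_le_card A B C : lt_card A B -> le_card B C -> lt_card A C.
Proof.
move=> [h1 h2] h3; split; first exact: le_card_trans h1 h3.
move=> h4; apply: h2; exact: le_card_trans h3 h4.
Qed.

Lemma lt_card_bool K : le_card nat K -> lt_card bool K.
Proof.
move=> hK; split.
  apply: le_card_trans hK; exists (fun b : bool => if b then 1 else 0).
  by case; case.
move=> h; have [g hg] := le_card_trans hK h.
have h01 : g 0 <> g 1 by move=> /hg.
have h02 : g 0 <> g 2 by move=> /hg.
have h12 : g 1 <> g 2 by move=> /hg.
by move: h01 h02 h12; case: (g 0); case: (g 1); case: (g 2).
Qed.

Fixpoint rename (tau : signature) (X Y : Type) (s : X -> Y) (t : term tau X) : term tau Y :=
  match t with
  | TVar x => TVar tau (s x)
  | TApp f ts => TApp (fun i => rename s (ts i))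
  end.

Definition sumf (X Y B : Type) (s : X -> Y) (z : X + B) : Y + B :=
  match z with inl x => inl (s x) | inr b => inr b end.

Definition conj2 tau Y (p q : form tau Y) : form tau Y :=
  FConj (fun b : bool => if b then p else q).
Definition disj2 tau Y (p q : form tau Y) : form tau Y :=
  FDisj (fun b : bool => if b then p else q).

Definition inB tau (N : Type) Y B (xv : N -> Y) : form tau (Y + B) :=
  FConj (fun b : B => FDisj (fun n : N => FEq (TVar tau (inr b)) (TVar tau (inl (xv n))))).

Fixpoint relz tau (N : Type) X (p : form tau X) : forall Y, (X -> Y) -> (N -> Y) -> form tau Y :=
  match p in form _ X0 return forall Y, (X0 -> Y) -> (N -> Y) -> form tau Y with
  | FEq _ t1 t2 => fun Y s xv => FEq (rename s t1) (rename s t2)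
  | FRel _ r ts => fun Y s xv => @FRel tau Y r (fun i => rename s (ts i))
  | FNeg _ q => fun Y s xv => FNeg (relz q s xv)
  | FConj _ _ ps => fun Y s xv => FConj (fun i => relz (ps i) s xv)
  | FDisj _ _ ps => fun Y s xv => FDisj (fun i => relz (ps i) s xv)
  | FEx _ B q => fun Y s xv =>
      FEx (conj2 (@inB tau N Y B xv) (relz q (@sumf _ _ B s) (fun n => inl (xv n))))
  | FAll _ B q => fun Y s xv =>
      FAll (disj2 (FNeg (@inB tau N Y B xv)) (relz q (@sumf _ _ B s) (fun n => inl (xv n))))
  end.

Lemma rel_inL tau K L N (hN : lt_card N K) (hL : le_card L K) (hb : lt_card bool K)
  X (p : form tau X) : inL K L p -> forall Y (s : X -> Y) (xv : N -> Y), inL K L (relz p s xv).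
Proof.
elim=> {X p} /=.
- by move=> *; constructor.
- by move=> *; constructor.
- by move=> X p _ IH Y s xv; constructor; apply: IH.
- by move=> X I ps hI _ IH Y s xv; constructor => // i; apply: IH.
- by move=> X I ps hI _ IH Y s xv; constructor => // i; apply: IH.
- move=> X B p hB _ IH Y s xv; constructor => //; constructor => // [[]].
    constructor; first exact: lt_le_card hB hL.
    by move=> b; constructor => // n; constructor.
  exact: IH.
- move=> X B p hB _ IH Y s xv; constructor => //; constructor => // [[]].
    constructor; constructor; first exact: lt_le_card hB hL.
    by move=> b; constructor => // n; constructor.
  exact: IH.
Qed.

Lemma eval_rename tau (M : model tau) X Y (s : X -> Y) (e : Y -> carrier M)
  (S : carrier M -> Prop) a0 (hS : fclosed S) (ee : X -> {a | S a}) :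
  (forall z, proj1_sig (ee z) = e (s z)) ->
  forall t, proj1_sig (@eval_term tau (submodel a0 hS) X ee t) = eval_term e (rename s t).
Proof.
move=> hee; elim=> [z|f ts IH] //=.
congr (fint _); apply: functional_extensionality => i; exact: IH.
Qed.

Lemma sig_eqE (A : Type) (S : A -> Prop) (a b : {x | S x}) : a = b <-> proj1_sig a = proj1_sig b.
Proof.
split=> [->//|]; case: a b => a ha [b hb] /= hab; subst b.
by rewrite (proof_irrelevance _ ha hb).
Qed.

Lemma sat_rel tau (M : model tau) N (x : N -> carrier M) (S : carrier M -> Prop)
  (hSx : forall a, S a <-> exists n, x n = a) (a0 : {a | S a}) (hS : fclosed S) X (p : form tau X) :
  forall Y (s : X -> Y) (xv : N -> Y) (e : Y -> carrier M) (ee : X -> {a | S a}),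
  (forall n, e (xv n) = x n) -> (forall z, proj1_sig (ee z) = e (s z)) ->
  (sat (@relz tau N X p Y s xv) e <-> @sat _ (submodel a0 hS) X p ee).
Proof.
elim: p => {X} /=.
- move=> X t1 t2 Y s xv e ee hx hee.
  by rewrite sig_eqE !(eval_rename a0 hS hee).
- move=> X r ts Y s xv e ee hx hee.
  suff -> : (fun i => eval_term e (rename s (ts i))) =
            (fun i => proj1_sig (@eval_term _ (submodel a0 hS) _ ee (ts i))) by [].
  apply: functional_extensionality => i; by rewrite (eval_rename a0 hS hee).
- move=> X q IH Y s xv e ee hx hee; have := IH _ s xv e ee hx hee; tauto.
- move=> X I ps IH Y s xv e ee hx hee; split=> h i; have := IH i _ s xv e ee hx hee; have := h i; tauto.
- move=> X I ps IH Y s xv e ee hx hee; split=> [[i h]|[i h]]; exists i;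
    have := IH i _ s xv e ee hx hee; tauto.
- move=> X B q IH Y s xv e ee hx hee; split.
  + move=> [a h]; have hin := h true; have hq := h false; simpl in hin, hq.
    have hSa : forall b, S (a b).
      move=> b; have [n hn] := hin b; simpl in hn; apply (proj2 (hSx _)); exists n; by rewrite hn hx.
    exists (fun b => exist S (a b) (hSa b)).
    have H := IH _ (@sumf _ _ B s) (fun n => inl (xv n)) (extend e a)
      (extend ee (fun b => exist S (a b) (hSa b))) ltac:(move=> n /=; exact: hx) ltac:(case=> z /=; [exact: hee | by []]).
    tauto.
  + move=> [a' h]; exists (fun b => proj1_sig (a' b)); case=> /=.
      move=> b; have [n hn] := proj1 (hSx _) (proj2_sig (a' b)); exists n => /=; by rewrite hx hn.
    have H := IH _ (@sumf _ _ B s) (fun n => inl (xv n)) (extend e (fun b => proj1_sig (a' b)))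
      (extend ee a') ltac:(move=> n /=; exact: hx) ltac:(case=> z /=; [exact: hee | by []]).
    tauto.
- move=> X B q IH Y s xv e ee hx hee; split.
  + move=> h a'; have [[|] /= hq] := h (fun b => proj1_sig (a' b)).
      exfalso; apply: hq => b; have [n hn] := proj1 (hSx _) (proj2_sig (a' b)).
      exists n => /=; by rewrite hx hn.
    have H := IH _ (@sumf _ _ B s) (fun n => inl (xv n)) (extend e (fun b => proj1_sig (a' b)))
      (extend ee a') ltac:(move=> n /=; exact: hx) ltac:(case=> z /=; [exact: hee | by []]).
    tauto.
  + move=> h a; case: (classic (forall b, S (a b))) => [hSa|hn]; last first.
      exists true => /= hin; apply: hn => b; have [n hn'] := hin b; simpl in hn'.
      apply (proj2 (hSx _)); exists n; by rewrite hn' hx.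
    exists false => /=.
    have H := IH _ (@sumf _ _ B s) (fun n => inl (xv n)) (extend e a)
      (extend ee (fun b => exist S (a b) (hSa b))) ltac:(move=> n /=; exact: hx) ltac:(case=> z /=; [exact: hee | by []]).
    apply/H; exact: h.
Qed.

Lemma ord0_False (i : 'I_0) : False. Proof. by case: i. Qed.

Definition emptyf (N : Type) (i : 'I_0) : N := False_rect N (ord0_False i).

Definition tcons (N : Type) k (n : N) (v : 'I_k -> N) : 'I_k.+1 -> N :=
  fun i => match unlift ord0 i with Some j => v j | None => n end.

Fixpoint allTup tau (N Y : Type) (k : nat) : (('I_k -> N) -> form tau Y) -> form tau Y :=
  match k return (('I_k -> N) -> form tau Y) -> form tau Y with
  | 0 => fun P => P (@emptyf N)
  | k'.+1 => fun P => FConj (fun n : N => @allTup tau N Y k' (fun v => P (tcons n v)))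
  end.

Lemma allTup_inL tau K L N Y (hN : lt_card N K) k (P : ('I_k -> N) -> form tau Y) :
  (forall v, inL K L (P v)) -> inL K L (allTup P).
Proof.
elim: k P => [|k IH] P hP /=; first exact: hP.
constructor => // n; apply: IH => v; exact: hP.
Qed.

Lemma allTup_sat tau (M : model tau) N Y k (P : ('I_k -> N) -> form tau Y) e :
  @sat tau M Y (allTup P) e <-> forall v, @sat tau M Y (P v) e.
Proof.
elim: k P => [|k IH] P /=.
  split=> [h v|h]; last exact: h.
  suff -> : v = @emptyf N by [].
  apply: functional_extensionality => i; case: (ord0_False i).
split=> [h v|h n]; last first.
  apply/IH => v; exact: h.
have -> : v = tcons (v ord0) (fun j => v (lift ord0 j)).
  apply: functional_extensionality => i; rewrite /tcons.
  by case: unliftP => [j ->|->].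
exact: (proj1 (IH _) (h (v ord0))).
Qed.

Definition closedF tau (N : Type) : form tau (Empty_set + N) :=
  FConj (fun f : fsym tau => @allTup tau N _ (farity f) (fun v =>
    FDisj (fun m : N => FEq (TApp (fun i => TVar tau (inr (v i)))) (TVar tau (inr m))))).

Definition injF tau (N : Type) : form tau (Empty_set + N) :=
  FConj (fun n : N => FConj (fun n' : N =>
    if excluded_middle_informative (n = n') then FEq (TVar tau (inr n)) (TVar tau (inr n))
    else FNeg (FEq (TVar tau (inr n)) (TVar tau (inr n'))))).

Definition phiR tau (N : Type) (phi : sentence tau) : form tau (Empty_set + N) :=
  @relz tau N Empty_set phi _ inl inr.

Definition emp (A : Type) (z : Empty_set) : A := match z with end.

Lemma closedF_sat tau (M : model tau) N (x : N -> carrier M) :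
  sat (closedF tau N) (extend (@emp _) x) <->
  forall f (v : 'I_(farity f) -> N), exists m, fint (fun i => x (v i)) = x m.
Proof.
split=> [h f v|h f].
  by have := h f; move/allTup_sat; apply.
apply/allTup_sat => v; exact: h.
Qed.

Lemma injF_sat tau (M : model tau) N (x : N -> carrier M) :
  sat (injF tau N) (extend (@emp _) x) <-> injective x.
Proof.
split=> [h n n' hx|h n n'] /=.
  apply: NNPP => hne; have := h n n'; case: excluded_middle_informative => //= _; exact.
case: excluded_middle_informative => //= hne hx; exact: hne (h _ _ hx).
Qed.

Lemma core_to tau (M : model tau) N (x : N -> carrier M) (phi : sentence tau) :
  inhabited N ->
  sat (closedF tau N) (extend (@emp _) x) -> sat (phiR N phi) (extend (@emp _) x) ->
  exists (S : carrier M -> Prop) (a0 : {a | S a}) (hS : fclosed S),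
    (forall a, S a <-> exists n, x n = a) /\ models (submodel a0 hS) phi.
Proof.
move=> [n0] /closedF_sat hc hp.
pose S := fun a => exists n, x n = a.
have hS : fclosed S.
  move=> f args hargs.
  pose v := fun i => proj1_sig (constructive_indefinite_description _ (hargs i)).
  have -> : args = (fun i => x (v i)).
    apply: functional_extensionality => i; rewrite /v.
    by case: constructive_indefinite_description.
  have [m hm] := hc f v; by exists m.
exists S, (exist S (x n0) (ex_intro _ n0 erefl)), hS; split => // .
rewrite /models.
apply/(sat_rel (S:=S) (x:=x)) ; last exact: hp.
- by [].
- by [].
- by case.
Qed.

Lemma core_from tau (M : model tau) N (x : N -> carrier M) (phi : sentence tau)
  (S : carrier M -> Prop) (a0 : {a | S a}) (hS : fclosed S) :
  (forall a, S a <-> exists n, x n = a) -> models (submodel a0 hS) phi ->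
  sat (closedF tau N) (extend (@emp _) x) /\ sat (phiR N phi) (extend (@emp _) x).
Proof.
move=> hSx hm; split.
  apply/closedF_sat => f v.
  have [m hm'] : exists m, x m = fint (fun i => x (v i)).
    apply: (proj1 (hSx _)); apply (hS f) => i; apply: (proj2 (hSx _)); by exists (v i).
  by exists m.
apply/(sat_rel hSx a0 hS) ; last exact: hm; by [] || by case.
Qed.

Definition chi_le tau N phi : sentence tau :=
  FEx (conj2 (closedF tau N) (phiR N phi)).
Definition chi_eq tau N phi : sentence tau :=
  FEx (conj2 (conj2 (closedF tau N) (phiR N phi)) (injF tau N)).

Theorem corollary2 (K L N : Type) (tau : signature) :
  regular_card K ->
  le_card nat L -> le_card L K ->
  lt_card (fsym tau) K ->
  inhabited N -> lt_card N L ->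
  forall phi : sentence tau, inL K L phi ->
    expressible_in K L (theta_le N phi) /\ expressible_in K L (theta_eq N phi).
Proof.
move=> hreg hNL hLK hF hNi hNLt phi hphi.
have hNK : lt_card N K := lt_le_card hNLt hLK.
have hb := lt_card_bool (le_card_trans hNL hLK).
have iC : inL K L (closedF tau N).
  constructor => // f; apply: allTup_inL => // v; constructor => // m; constructor.
have iP : inL K L (phiR N phi) by apply: rel_inL.
have iI : inL K L (injF tau N).
  rewrite /injF; apply: inL_conj => // n; apply: inL_conj => // n'; case: excluded_middle_informative => _ /=;
  by repeat constructor.
split.
- exists (chi_le N phi); split.
    constructor => //; constructor => // -[] //.
  move=> M; split.
  + move=> [S [a0 [hS [[g hg] hm]]]].
    pose x := fun n => match excluded_middle_informative (exists a, g a = n) with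
                       | left h => proj1_sig (proj1_sig (constructive_indefinite_description _ h))
                       | right _ => proj1_sig a0 end.
    have hSx : forall a, S a <-> exists n, x n = a.
      move=> a; split=> [ha|[n <-]].
        exists (g (exist S a ha)); rewrite /x; case: excluded_middle_informative => [h|[]]; last by eexists.
        case: constructive_indefinite_description => a' /= /hg ha'; by rewrite ha'.
      rewrite /x; case: excluded_middle_informative => [h|_]; last exact: proj2_sig a0.
      exact: proj2_sig.
    have [h1 h2] := core_from hSx hm.
    exists x => -[] //.
  + move=> [x hx]; have h1 := hx true; have h2 := hx false; simpl in h1, h2.
    have [S [a0 [hS [hSx hm]]]] := core_to hNi h1 h2.
    exists S, a0, hS; split => //.
    exists (fun a => proj1_sig (constructive_indefinite_description _ (proj1 (hSx _) (proj2_sig a)))).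
    move=> a b; do 2 case: constructive_indefinite_description => /=.
    by move=> n hn m hm' hnm; apply/sig_eqE; rewrite -hn -hm' hnm.
- exists (chi_eq N phi); split.
    constructor => //; constructor => // -[] //; constructor => // -[] //.
  move=> M; split.
  + move=> [S [a0 [hS [[g [h hgh hhg]] hm]]]].
    pose x := fun n => proj1_sig (h n).
    have hSx : forall a, S a <-> exists n, x n = a.
      move=> a; split=> [ha|[n <-]]; last exact: proj2_sig.
      by exists (g (exist S a ha)); rewrite /x hgh.
    have [h1 h2] := core_from hSx hm.
    exists x => -[] /=; first by case.
    apply/injF_sat => n n' /sig_eqE hx.
    by rewrite -(hhg n) -(hhg n') hx.
  + move=> [x hx]; have h1 := hx true; have h3 := hx false; simpl in h1, h3.
    have h11 := h1 true; have h2 := h1 false; simpl in h11, h2.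
    have hinj : injective x by apply/injF_sat.
    have [S [a0 [hS [hSx hm]]]] := core_to hNi h11 h2.
    exists S, a0, hS; split => //.
    exists (fun a => proj1_sig (constructive_indefinite_description _ (proj1 (hSx _) (proj2_sig a)))).
    exists (fun n => exist S (x n) (proj2 (hSx _) (ex_intro _ n erefl))).
      move=> a; apply/sig_eqE => /=.
      by case: constructive_indefinite_description.
    move=> n /=; case: constructive_indefinite_description => m /= hm'.
    exact: hinj.
Qed.
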